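(* Every Markov shift $X$ is Borel isomorphic to a Borel system of the form $W\sqcup\bigsqcup_{n\in\mathbb N}\Sigma(L_n)$, where $W$ is weakly wandering (an invariant Borel subsystem consisting of a weakly wandering set) and each $L_n$ is a loop graph, $\Sigma(L_n)$ denoting the corresponding Markov shift.
   Context: A Markov shift $\Sigma(G)$ is the left shift on the set of bi-infinite edge paths in a directed graph $G$ with countably (possibly finitely) many vertices and edges, with the product of discrete topologies; it is a Borel system (standard Borel space with a Borel automorphism). A Borel isomorphism of Borel systems is a Borel bijection with Borel inverse intertwining the actions. In a Borel system $(X,T)$, a Borel set $W$ is wandering if the sets $T^kW$, $k\in\mathbb Z$, are pairwise disjoint; a set is weakly wandering if it is a Borel subset of a countable union of wandering sets. A loop graph is a directed graph consisting of simple loops all based at a common vertex and otherwise pairwise non-intersecting; the associated Markov shift is a loop system. *)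

(* Defs.v *)
From Stdlib Require Import ZArith Arith Lia.
Open Scope Z_scope.

Record graph := Graph {
  vert : Type;
  edge : Type;
  src : edge -> vert;
  tgt : edge -> vert;
  vert_countable : exists c : vert -> nat, forall u v, c u = c v -> u = v;
  edge_countable : exists c : edge -> nat, forall e f, c e = c f -> e = f
}.

Definition is_path (G : graph) (x : Z -> edge G) : Prop :=
  forall n : Z, tgt G (x n) = src G (x (n + 1)).

Definition path (G : graph) : Type := { x : Z -> edge G | is_path G x }.

Definition shiftZ (G : graph) (k : Z) (x : path G) : path G.
Proof.
  refine (exist _ (fun n => proj1_sig x (n + k)) _).
  intro n. destruct x as [x hx]. simpl.
  replace (n + 1 + k) with ((n + k) + 1) by lia. apply hx.
Defined.

Definition shift (G : graph) (x : path G) : path G := shiftZ G 1 x.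

Definition sigma_algebra {T : Type} (M : (T -> Prop) -> Prop) : Prop :=
  M (fun _ => True) /\
  (forall A, M A -> M (fun x => ~ A x)) /\
  (forall A : nat -> T -> Prop, (forall n, M (A n)) -> M (fun x => exists n, A n x)).

Definition generated {T : Type} (C : (T -> Prop) -> Prop) (A : T -> Prop) : Prop :=
  forall M, sigma_algebra M -> (forall B, C B -> M B) -> M A.

(* Borel sets of Sigma(G): the product of discrete topologies on edge^Z is
   second countable with the cylinder sets as subbasis, so its Borel
   sigma-algebra (restricted to Sigma(G)) is generated by the cylinders. *)
Definition cylinder (G : graph) (B : path G -> Prop) : Prop :=
  exists (n : Z) (e : edge G), B = (fun x => proj1_sig x n = e).

Definition borel (G : graph) (A : path G -> Prop) : Prop := generated (cylinder G) A.

Definition union_space (L : nat -> graph) : Type := { n : nat & path (L n) }.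

Definition union_shift (L : nat -> graph) (u : union_space L) : union_space L :=
  existT _ (projT1 u) (shift (L (projT1 u)) (projT2 u)).

Definition union_borel (L : nat -> graph) (A : union_space L -> Prop) : Prop :=
  forall n : nat, borel (L n) (fun x => A (existT _ n x)).

Definition shift_set (G : graph) (k : Z) (W : path G -> Prop) : path G -> Prop :=
  fun x => exists w, W w /\ x = shiftZ G k w.

Definition wandering (G : graph) (W : path G -> Prop) : Prop :=
  borel G W /\
  forall j k : Z, j <> k -> forall x, ~ (shift_set G j W x /\ shift_set G k W x).

Definition weakly_wandering (G : graph) (W : path G -> Prop) : Prop :=
  borel G W /\
  exists U : nat -> path G -> Prop,
    (forall m, wandering G (U m)) /\ (forall x, W x -> exists m, U m x).

Definition invariant (G : graph) (W : path G -> Prop) : Prop :=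
  forall x, W (shift G x) <-> W x.

(* Loop graph: simple loops (indexed by I, loop i of length len i with edges
   f i 0, ..., f i (len i - 1)) all based at v0, otherwise pairwise disjoint,
   and the graph consists exactly of these loops. *)
Definition loop_graph (G : graph) : Prop :=
  exists (v0 : vert G) (I : Type) (len : I -> nat) (f : I -> nat -> edge G),
    (forall i, (0 < len i)%nat) /\
    (forall e, exists i j, (j < len i)%nat /\ f i j = e) /\
    (forall i j i' j', (j < len i)%nat -> (j' < len i')%nat ->
        f i j = f i' j' -> i = i' /\ j = j') /\
    (forall i, src G (f i 0%nat) = v0) /\
    (forall i, tgt G (f i (len i - 1)%nat) = v0) /\
    (forall i j, (S j < len i)%nat -> tgt G (f i j) = src G (f i (S j))) /\
    (forall i j, (0 < j < len i)%nat -> src G (f i j) <> v0) /\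
    (forall i j i' j', (0 < j < len i)%nat -> (0 < j' < len i')%nat ->
        src G (f i j) = src G (f i' j') -> i = i' /\ j = j') /\
    (forall v, v = v0 \/ exists i j, (0 < j < len i)%nat /\ src G (f i j) = v).

(* Main.v *)
From Stdlib Require Import ZArith Arith Lia List Classical ClassicalEpsilon FunctionalExtensionality PropExtensionality ProofIrrelevance Cantor.
Require Import Defs.
Open Scope Z_scope.


Lemma sig_eq {A : Type} {P : A -> Prop} (a b : {x | P x}) : proj1_sig a = proj1_sig b -> a = b.
Proof. destruct a, b; simpl; intros ->; f_equal; apply proof_irrelevance. Qed.

Lemma path_ext (H : graph) (x y : path H) : (forall m, proj1_sig x m = proj1_sig y m) -> x = y.
Proof. intro h. apply sig_eq. apply functional_extensionality. exact h. Qed.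

Lemma borel_ext (H : graph) (A B : path H -> Prop) :
  borel H A -> (forall x, A x <-> B x) -> borel H B.
Proof.
  intros HA Heq. replace B with A; auto.
  apply functional_extensionality; intro x; apply propositional_extensionality; auto.
Qed.

Lemma borel_True H : borel H (fun _ => True).
Proof. intros M [h _] _. exact h. Qed.

Lemma borel_compl H A : borel H A -> borel H (fun x => ~ A x).
Proof. intros HA M HM HC. pose proof HM as [h1 [h2 h3]]. apply h2. apply HA; auto. Qed.

Lemma borel_nunion H (A : nat -> path H -> Prop) :
  (forall n, borel H (A n)) -> borel H (fun x => exists n, A n x).
Proof. intros HA M HM HC. pose proof HM as [h1 [h2 h3]]. apply h3. intro n. apply HA; auto. Qed.

Lemma borel_cyl H n e : borel H (fun x => proj1_sig x n = e).
Proof. intros M HM HC. apply HC. exists n, e. reflexivity. Qed.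

Lemma borel_False H : borel H (fun _ => False).
Proof. eapply borel_ext. apply borel_compl, borel_True. intros; tauto. Qed.

Lemma borel_prop H (Q : Prop) : borel H (fun _ => Q).
Proof.
  destruct (classic Q).
  - eapply borel_ext; [apply borel_True|]; tauto.
  - eapply borel_ext; [apply borel_False|]; tauto.
Qed.

Lemma borel_or H A B : borel H A -> borel H B -> borel H (fun x => A x \/ B x).
Proof.
  intros. eapply borel_ext.
  - apply (borel_nunion H (fun n => match n with O => A | _ => B end)). intros [|n]; auto.
  - intro x; split.
    + intros [[|n] h]; auto.
    + intros [h|h]. exists O; auto. exists 1%nat; auto.
Qed.

Lemma borel_and H A B : borel H A -> borel H B -> borel H (fun x => A x /\ B x).
Proof.
  intros. eapply borel_ext.
  - apply (borel_compl H _ (borel_or H _ _ (borel_compl H A H0) (borel_compl H B H1))).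
  - intro x; cbv beta; split.
    + intro h. destruct (classic (A x)), (classic (B x)); tauto.
    + tauto.
Qed.

Lemma borel_ex_Z H (A : Z -> path H -> Prop) :
  (forall z, borel H (A z)) -> borel H (fun x => exists z, A z x).
Proof.
  intros. eapply borel_ext.
  - apply (borel_nunion H (fun n x => A (Z.of_nat n) x \/ A (- Z.of_nat n) x)).
    intro; apply borel_or; auto.
  - intro x; split.
    + intros [n [h|h]]; eauto.
    + intros [z h]. exists (Z.to_nat (Z.abs z)). destruct (Z_le_gt_dec 0 z).
      * left. replace (Z.of_nat _) with z by lia. auto.
      * right. replace (- Z.of_nat _) with z by lia. auto.
Qed.

Lemma borel_all_Z H (A : Z -> path H -> Prop) :
  (forall z, borel H (A z)) -> borel H (fun x => forall z, A z x).
Proof.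
  intros. eapply borel_ext.
  - apply borel_compl, (borel_ex_Z H (fun z x => ~ A z x)). intro; apply borel_compl; auto.
  - intro x; split.
    + intros h z. destruct (classic (A z x)); auto. exfalso; eauto.
    + intros h [z hz]; auto.
Qed.

Lemma borel_all_nat H (A : nat -> path H -> Prop) :
  (forall z, borel H (A z)) -> borel H (fun x => forall z, A z x).
Proof.
  intros. eapply borel_ext.
  - apply borel_compl, (borel_nunion H (fun z x => ~ A z x)). intro; apply borel_compl; auto.
  - intro x; split.
    + intros h z. destruct (classic (A z x)); auto. exfalso; eauto.
    + intros h [z hz]; auto.
Qed.

Lemma borel_imp_prop H (Q : Prop) A : borel H A -> borel H (fun x => Q -> A x).
Proof.
  intro h. destruct (classic Q).
  - eapply borel_ext; [apply h|]. intro; tauto.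
  - eapply borel_ext; [apply borel_True|]. intro; tauto.
Qed.

Lemma borel_and_prop H (Q : Prop) A : borel H A -> borel H (fun x => Q /\ A x).
Proof. intro h. apply borel_and; auto. apply borel_prop. Qed.

Lemma borel_coord H (P : edge H -> Prop) n : borel H (fun x => P (proj1_sig x n)).
Proof.
  destruct (edge_countable H) as [ce hce].
  eapply borel_ext.
  - apply (borel_nunion H (fun k x => exists e, ce e = k /\ P e /\ proj1_sig x n = e)).
    intro k. destruct (classic (exists e, ce e = k /\ P e)) as [[e [h1 h2]]|hn].
    + eapply borel_ext. apply (borel_cyl H n e). intro x; split.
      * intro h; exists e; auto.
      * intros [e' [h1' [h2' h3']]]. rewrite h3'. apply hce; congruence.
    + eapply borel_ext. apply borel_False. intro x; split.
      * tauto.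
      * intros [e' [h1' [h2' _]]]. apply hn; eauto.
  - intro x; cbv beta; split.
    + intros [k [e [_ [h1 h2]]]]. subst; auto.
    + intro h. exists (ce (proj1_sig x n)), (proj1_sig x n); auto.
Qed.

Lemma borel_pullback (H K : graph) (h : path H -> path K)
  (hyp : forall m e, borel H (fun y => proj1_sig (h y) m = e)) :
  forall A, borel K A -> borel H (fun y => A (h y)).
Proof.
  intros A HA. apply (HA (fun A => borel H (fun y => A (h y)))).
  - split; [|split].
    + apply borel_True.
    + intros B hB. apply (borel_compl H _ hB).
    + intros B hB. apply (borel_nunion H (fun n y => B n (h y)) hB).
  - intros B [m [e ->]]. apply hyp.
Qed.

Lemma borel_push (H K : graph) (psi : path H -> path K)
  (inj : forall y y', psi y = psi y' -> y = y')
  (himg : borel K (fun x => exists y, psi y = x))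
  (hyp : forall m a, borel K (fun x => exists y, psi y = x /\ proj1_sig y m = a)) :
  forall C, borel H C -> borel K (fun x => exists y, psi y = x /\ C y).
Proof.
  intros C HC. apply (HC (fun C => borel K (fun x => exists y, psi y = x /\ C y))).
  - split; [|split].
    + eapply borel_ext. apply himg. intro x; split; intros [y h]; exists y; tauto.
    + intros B hB. eapply borel_ext. apply (borel_and K _ _ himg (borel_compl K _ hB)).
      intro x; split.
      * intros [[y hy] hn]. exists y. split; auto. intro hb. apply hn. eauto.
      * intros [y [hy hb]]. split. eauto. intros [y' [hy' hb']]. apply hb.
        rewrite (inj y y'); auto. congruence.
    + intros B hB. eapply borel_ext. apply (borel_nunion K _ hB). intro x; split.
      * intros [n [y [h1 h2]]]. eauto.
      * intros [y [h1 [n h2]]]. eauto.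
  - intros B [m [e ->]]. apply hyp.
Qed.

Lemma to_nat_inj a b : to_nat a = to_nat b -> a = b.
Proof. intro h. rewrite <- (cancel_of_to a), <- (cancel_of_to b), h. reflexivity. Qed.

Lemma least_nat (P : nat -> Prop) : (exists n, P n) -> exists n, P n /\ forall m, P m -> (n <= m)%nat.
Proof.
  intros [n0 h0]. revert h0. induction n0 as [n0 IH] using (well_founded_induction lt_wf). intro h0.
  destruct (classic (exists m, (m < n0)%nat /\ P m)) as [[m [hm pm]]|hn].
  - exact (IH m hm pm).
  - exists n0. split; auto. intros m pm. destruct (Nat.le_gt_cases n0 m); auto. exfalso; eauto.
Qed.

Lemma last_before (P : Z -> Prop) m t0 : t0 <= m -> P t0 ->
  exists k, k <= m /\ P k /\ forall t, k < t <= m -> ~ P t.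
Proof.
  assert (forall d t0, (Z.to_nat (m - t0) <= d)%nat -> t0 <= m -> P t0 ->
    exists k, k <= m /\ P k /\ forall t, k < t <= m -> ~ P t); eauto.
  induction d; intros t1 hd h0 p0;
    destruct (classic (exists t, t1 < t <= m /\ P t)) as [[t [ht pt]]|hn].
  - lia.
  - exists t1; repeat split; auto. intros t ht pt. apply hn; eauto.
  - apply (IHd t); auto; lia.
  - exists t1; repeat split; auto. intros t ht pt. apply hn; eauto.
Qed.

Lemma first_after (P : Z -> Prop) m t0 : m < t0 -> P t0 ->
  exists q, m < q /\ P q /\ forall t, m < t < q -> ~ P t.
Proof.
  assert (forall d t0, (Z.to_nat (t0 - m) <= d)%nat -> m < t0 -> P t0 ->
    exists q, m < q /\ P q /\ forall t, m < t < q -> ~ P t); eauto.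
  induction d; intros t1 hd h0 p0;
    destruct (classic (exists t, m < t < t1 /\ P t)) as [[t [ht pt]]|hn].
  - lia.
  - exists t1; repeat split; auto. intros t ht pt. apply hn; eauto.
  - apply (IHd t); auto; lia.
  - exists t1; repeat split; auto. intros t ht pt. apply hn; eauto.
Qed.


Section Main.
Variable G : graph.
Variable c : vert G -> nat.
Hypothesis c_inj : forall u v, c u = c v -> u = v.
Variable ce : edge G -> nat.
Hypothesis ce_inj : forall e f, ce e = ce f -> e = f.

Definition lp := (edge G * list (edge G))%type.
Definition ll (l : lp) : list (edge G) := fst l :: snd l.
Definition len (l : lp) : nat := S (length (snd l)).
Definition nthl (l : lp) (j : nat) : edge G := nth j (ll l) (fst l).

Lemma len_nz l : len l <> 0%nat.
Proof. unfold len; lia. Qed.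

Definition good (n : nat) (l : lp) : Prop :=
  (forall j, (S j < len l)%nat -> tgt G (nthl l j) = src G (nthl l (S j))) /\
  c (src G (fst l)) = n /\
  c (tgt G (nthl l (len l - 1))) = n /\
  (forall j, (0 < j < len l)%nat -> (n < c (src G (nthl l j)))%nat).

Definition Loop n := { l : lp | good n l }.
Definition LE n := { p : Loop n * nat | (snd p < len (proj1_sig (fst p)))%nat }.
Definition LV n := option { p : Loop n * nat | (0 < snd p < len (proj1_sig (fst p)))%nat }.

Definition srcL n (a : LE n) : LV n :=
  match lt_dec 0 (snd (proj1_sig a)) with
  | left h => Some (exist _ (proj1_sig a) (conj h (proj2_sig a)))
  | right _ => None end.

Definition tgtL n (a : LE n) : LV n :=
  match lt_dec (S (snd (proj1_sig a))) (len (proj1_sig (fst (proj1_sig a)))) with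
  | left h => Some (exist (fun p : Loop n * nat => (0 < snd p < len (proj1_sig (fst p)))%nat)
                   (fst (proj1_sig a), S (snd (proj1_sig a))) (conj (Nat.lt_0_succ _) h))
  | right _ => None end.

Definition vval n (v : LV n) : option (Loop n * nat) := option_map (@proj1_sig _ _) v.

Lemma vval_inj n v w : vval n v = vval n w -> v = w.
Proof.
  destruct v as [v|], w as [w|]; simpl; intro h; try discriminate; auto.
  injection h; intro; f_equal; apply sig_eq; auto.
Qed.

Lemma vval_src n a : vval n (srcL n a) =
  if Nat.eqb (snd (proj1_sig a)) 0 then None else Some (proj1_sig a).
Proof.
  unfold srcL. destruct (lt_dec _ _); destruct (Nat.eqb_spec (snd (proj1_sig a)) 0); simpl; auto; lia.
Qed.

Lemma vval_tgt n a : vval n (tgtL n a) =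
  if Nat.ltb (S (snd (proj1_sig a))) (len (proj1_sig (fst (proj1_sig a))))
  then Some (fst (proj1_sig a), S (snd (proj1_sig a))) else None.
Proof.
  unfold tgtL. destruct (lt_dec _ _); destruct (Nat.ltb_spec (S (snd (proj1_sig a))) (len (proj1_sig (fst (proj1_sig a))))); simpl; auto; lia.
Qed.

Fixpoint encl (l : list nat) : nat :=
  match l with nil => 0%nat | a :: l => S (to_nat (a, encl l)) end.

Lemma encl_inj l l' : encl l = encl l' -> l = l'.
Proof.
  revert l'; induction l; destruct l'; intro h; cbn [encl] in h; try discriminate; auto.
  assert (h' : to_nat (a, encl l) = to_nat (n, encl l')) by (apply (f_equal Nat.pred) in h; exact h).
  apply to_nat_inj in h'. injection h'; intros; f_equal; auto.
Qed.

Lemma map_ce_inj l l' : map ce l = map ce l' -> l = l'.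
Proof.
  revert l'; induction l; destruct l'; simpl; intro h; try discriminate; auto.
  injection h; intros; f_equal; auto.
Qed.

Definition codeP n (p : Loop n * nat) : nat :=
  to_nat (encl (map ce (ll (proj1_sig (fst p)))), snd p).

Lemma codeP_inj n p q : codeP n p = codeP n q -> p = q.
Proof.
  unfold codeP. intro h. apply to_nat_inj in h.
  pose proof (f_equal fst h) as h1. pose proof (f_equal snd h) as h2. cbn [fst snd] in h1, h2.
  apply encl_inj, map_ce_inj in h1.
  destruct p as [[[a r] gp] j], q as [[[a' r'] gq] j']. simpl in *. unfold ll in h1; simpl in h1.
  injection h1; intros; subst. f_equal. apply sig_eq. reflexivity.
Qed.

Lemma LE_countable n : exists f : LE n -> nat, forall a b, f a = f b -> a = b.
Proof. exists (fun a => codeP n (proj1_sig a)). intros a b h. apply sig_eq, (codeP_inj n), h. Qed.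

Lemma LV_countable n : exists f : LV n -> nat, forall a b, f a = f b -> a = b.
Proof.
  exists (fun v => match v with None => 0%nat | Some w => S (codeP n (proj1_sig w)) end).
  intros [a|] [b|] h; try discriminate; auto.
  injection h; intro; f_equal; apply sig_eq, (codeP_inj n); auto.
Qed.

Definition L n : graph := Graph (LV n) (LE n) (srcL n) (tgtL n) (LV_countable n) (LE_countable n).

Definition fL n (i : Loop n) (j : nat) : LE n :=
  exist (fun p : Loop n * nat => (snd p < len (proj1_sig (fst p)))%nat)
    (i, Nat.modulo j (len (proj1_sig i))) (Nat.mod_upper_bound j _ (len_nz (proj1_sig i))).

Lemma L_loop n : loop_graph (L n).
Proof.
  unfold loop_graph. cbn [vert edge L src tgt].
  exists None, (Loop n), (fun i => len (proj1_sig i)), (fL n).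
  split; [|split; [|split; [|split; [|split; [|split; [|split; [|split]]]]]]].
  - intro i; unfold len; lia.
  - intros [[i j] hj]. exists i, j. cbn [fst snd] in hj. split; auto. apply sig_eq. unfold fL. cbn [proj1_sig fst snd].
    rewrite Nat.mod_small; auto.
  - intros i j i' j' h1 h2 h. apply (f_equal (@proj1_sig _ _)) in h. unfold fL in h. cbn [proj1_sig] in h.
    rewrite !Nat.mod_small in h by auto. injection h; auto.
  - intro i. apply vval_inj. rewrite vval_src. unfold fL. cbn [proj1_sig fst snd vval option_map].
    rewrite Nat.Div0.mod_0_l. reflexivity.
  - intro i. apply vval_inj. rewrite vval_tgt. unfold fL. cbn [proj1_sig fst snd vval option_map].
    rewrite Nat.mod_small by (pose proof (len_nz (proj1_sig i)); lia).
    destruct (Nat.ltb_spec (S (len (proj1_sig i) - 1)) (len (proj1_sig i))); auto.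
    pose proof (len_nz (proj1_sig i)); lia.
  - intros i j h. apply vval_inj. rewrite vval_tgt, vval_src. unfold fL. cbn [proj1_sig fst snd].
    rewrite !Nat.mod_small by lia.
    destruct (Nat.ltb_spec (S j) (len (proj1_sig i))), (Nat.eqb_spec (S j) 0); try lia; reflexivity.
  - intros i j h heq. apply (f_equal (vval n)) in heq. rewrite vval_src in heq. unfold fL in heq. cbn [proj1_sig fst snd vval option_map] in heq.
    rewrite Nat.mod_small in heq by lia. destruct (Nat.eqb_spec j 0); [lia|discriminate].
  - intros i j i' j' h1 h2 heq. apply (f_equal (vval n)) in heq. rewrite !vval_src in heq. unfold fL in heq. cbn [proj1_sig fst snd] in heq.
    rewrite !Nat.mod_small in heq by lia.
    destruct (Nat.eqb_spec j 0), (Nat.eqb_spec j' 0); try lia. injection heq; auto.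
  - intros [[[i j] hij]|].
    + right. exists i, j. cbn [fst snd] in hij. split; auto. apply vval_inj. rewrite vval_src. unfold fL. cbn [proj1_sig fst snd vval option_map].
      rewrite Nat.mod_small by lia. destruct (Nat.eqb_spec j 0); [lia|reflexivity].
    + left; reflexivity.
Qed.

Definition gL n (a : LE n) : edge G := nthl (proj1_sig (fst (proj1_sig a))) (snd (proj1_sig a)).

Lemma psi_path n (y : path (L n)) : is_path G (fun m => gL n (proj1_sig y m)).
Proof.
  intro m. destruct y as [y hy]. cbn [proj1_sig]. pose proof (hy m) as h. cbn [L tgt src] in h.
  apply (f_equal (vval n)) in h. rewrite vval_tgt, vval_src in h.
  unfold gL.
  destruct (y m) as [[l j] hj]; destruct (y (m+1)) as [[l' j'] hj']. cbn [proj1_sig fst snd] in *.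
  destruct l as [l gl], l' as [l' gl']. cbn [proj1_sig fst snd] in *.
  destruct (Nat.ltb_spec (S j) (len l)), (Nat.eqb_spec j' 0); try discriminate.
  - injection h; intros e1 e2. subst.
    pose proof gl as [h1 _]. apply h1; auto.
  - subst j'. apply c_inj. pose proof gl as [_ [_ [h3 _]]]. pose proof gl' as [_ [h2' _]].
    replace j with (len l - 1)%nat by lia. rewrite h3. unfold nthl. cbn [nth ll fst]. rewrite h2'. reflexivity.
Qed.

Definition psiN n (y : path (L n)) : path G :=
  exist _ (fun m => gL n (proj1_sig y m)) (psi_path n y).

Definition fits (X : Z -> edge G) (k : Z) (l : lp) : Prop :=
  forall t, (t < len l)%nat -> X (k + Z.of_nat t) = nthl l t.
Definition visit n (X : Z -> edge G) t := c (src G (X t)) = n.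

Lemma fits_start n X k l : good n l -> fits X k l -> visit n X k.
Proof.
  intros [_ [h _]] hf. unfold visit. specialize (hf 0%nat ltac:(unfold len; lia)).
  rewrite Z.add_0_r in hf. rewrite hf. exact h.
Qed.

Lemma fits_mid n X k l t : good n l -> fits X k l -> (0 < t < len l)%nat ->
  (n < c (src G (X (k + Z.of_nat t)%Z)))%nat.
Proof. intros [_ [_ [_ h]]] hf ht. rewrite hf by lia. apply h; auto. Qed.

Lemma fits_end n X k l : is_path G X -> good n l -> fits X k l -> visit n X (k + Z.of_nat (len l)).
Proof.
  intros hp [_ [_ [h _]]] hf. unfold visit.
  replace (k + Z.of_nat (len l)) with ((k + Z.of_nat (len l - 1)) + 1) by (unfold len; lia).
  rewrite <- hp. rewrite hf by (unfold len; lia). exact h.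
Qed.

Lemma fits_unique n X k l k' l' m : is_path G X -> good n l -> good n l' -> fits X k l -> fits X k' l' ->
  k <= m < k + Z.of_nat (len l) -> k' <= m < k' + Z.of_nat (len l') -> k = k' /\ l = l'.
Proof.
  intros hp g1 g2 f1 f2 r1 r2.
  assert (kk : k = k').
  { destruct (Z.lt_trichotomy k k') as [h|[h|h]]; auto; exfalso.
    - pose proof (fits_start n X k' l' g2 f2) as s. unfold visit in s.
      pose proof (fits_mid n X k l (Z.to_nat (k' - k)) g1 f1 ltac:(lia)) as mm.
      rewrite Z2Nat.id in mm by lia. replace (k + (k'-k)) with k' in mm by lia. lia.
    - pose proof (fits_start n X k l g1 f1) as s. unfold visit in s.
      pose proof (fits_mid n X k' l' (Z.to_nat (k - k')) g2 f2 ltac:(lia)) as mm.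
      rewrite Z2Nat.id in mm by lia. replace (k' + (k-k')) with k in mm by lia. lia. }
  subst k'.
  assert (ln : len l = len l').
  { destruct (Nat.lt_trichotomy (len l) (len l')) as [h|[h|h]]; auto; exfalso.
    - pose proof (fits_end n X k l hp g1 f1) as s. unfold visit in s.
      pose proof (fits_mid n X k l' (len l) g2 f2 ltac:(unfold len in *; lia)). lia.
    - pose proof (fits_end n X k l' hp g2 f2) as s. unfold visit in s.
      pose proof (fits_mid n X k l (len l') g1 f1 ltac:(unfold len in *; lia)). lia. }
  split; auto.
  destruct l as [a r], l' as [a' r'].
  assert (he : ll (a,r) = ll (a',r')).
  { apply nth_ext with (d := a) (d' := a').
    - unfold len in ln; cbn in *. lia.
    - intros t ht. pose proof (f1 t) as e1. pose proof (f2 t) as e2. unfold nthl in e1, e2.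
      cbn [fst] in e1, e2. rewrite <- e1, <- e2; auto; unfold len in *; cbn in *; lia. }
  unfold ll in he; cbn [fst snd] in he. injection he; intros; subst; auto.
Qed.

Lemma step_fwd n (y : path (L n)) k l t :
  proj1_sig (proj1_sig y k) = (l, t) -> (S t < len (proj1_sig l))%nat ->
  proj1_sig (proj1_sig y (k + 1)) = (l, S t).
Proof.
  intros h1 h2. pose proof (proj2_sig y k) as h. cbn [L tgt src] in h.
  apply (f_equal (vval n)) in h. rewrite vval_tgt, vval_src, h1 in h. cbn [fst snd] in h.
  destruct (Nat.ltb_spec (S t) (len (proj1_sig l))); try lia.
  destruct (Nat.eqb_spec (snd (proj1_sig (proj1_sig y (k + 1)))) 0); try discriminate.
  injection h; auto.
Qed.

Lemma step_bwd n (y : path (L n)) k l t :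
  proj1_sig (proj1_sig y (k + 1)) = (l, S t) -> proj1_sig (proj1_sig y k) = (l, t).
Proof.
  intros h1. pose proof (proj2_sig y k) as h. cbn [L tgt src] in h.
  apply (f_equal (vval n)) in h. rewrite vval_tgt, vval_src, h1 in h. cbn [fst snd] in h.
  destruct (proj1_sig (proj1_sig y k)) as [l' t'] eqn:E. cbn [fst snd] in h.
  destruct (Nat.ltb_spec (S t') (len (proj1_sig l'))); try discriminate.
  injection h; intros; subst; auto.
Qed.

Lemma walk n (y : path (L n)) m l j : proj1_sig (proj1_sig y m) = (l, j) ->
  forall t, (t < len (proj1_sig l))%nat -> proj1_sig (proj1_sig y (m - Z.of_nat j + Z.of_nat t)) = (l, t).
Proof.
  intros h0 t ht.
  assert (hj : (j < len (proj1_sig l))%nat).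
  { pose proof (proj2_sig (proj1_sig y m)) as hh. cbn beta in hh. rewrite h0 in hh. exact hh. }
  assert (back : forall d, (d <= j)%nat -> proj1_sig (proj1_sig y (m - Z.of_nat d)) = (l, (j - d)%nat)).
  { induction d; intro hd.
    - rewrite Z.sub_0_r, Nat.sub_0_r. auto.
    - apply step_bwd. replace (m - Z.of_nat (S d) + 1) with (m - Z.of_nat d) by lia.
      rewrite IHd by lia. f_equal. lia. }
  assert (fwd : forall d, (j + d < len (proj1_sig l))%nat -> proj1_sig (proj1_sig y (m + Z.of_nat d)) = (l, (j + d)%nat)).
  { induction d; intro hd.
    - rewrite Z.add_0_r, Nat.add_0_r. auto.
    - replace (m + Z.of_nat (S d)) with (m + Z.of_nat d + 1) by lia.
      replace (j + S d)%nat with (S (j + d)) by lia.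
      apply step_fwd; [apply IHd; lia | lia]. }
  destruct (Nat.le_gt_cases t j).
  - replace (m - Z.of_nat j + Z.of_nat t) with (m - Z.of_nat (j - t)) by lia.
    rewrite back by lia. f_equal. lia.
  - replace (m - Z.of_nat j + Z.of_nat t) with (m + Z.of_nat (t - j)) by lia.
    rewrite fwd by lia. f_equal. lia.
Qed.

Lemma psi_fits n (y : path (L n)) m l j : proj1_sig (proj1_sig y m) = (l, j) ->
  fits (proj1_sig (psiN n y)) (m - Z.of_nat j) (proj1_sig l) /\ (j < len (proj1_sig l))%nat.
Proof.
  intro h0. split.
  - intros t ht. cbn [psiN proj1_sig]. unfold gL. rewrite (walk n y m l j h0 t ht). reflexivity.
  - pose proof (proj2_sig (proj1_sig y m)) as hh. cbn beta in hh. rewrite h0 in hh. exact hh.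
Qed.

Lemma psi_inj n y y' : psiN n y = psiN n y' -> y = y'.
Proof.
  intro h. apply path_ext. intro m. apply sig_eq.
  destruct (proj1_sig (proj1_sig y m)) as [l j] eqn:E1.
  destruct (proj1_sig (proj1_sig y' m)) as [l' j'] eqn:E2.
  destruct (psi_fits n y m l j E1) as [f1 b1].
  destruct (psi_fits n y' m l' j' E2) as [f2 b2]. rewrite <- h in f2.
  destruct (fits_unique n _ _ _ _ _ m (proj2_sig (psiN n y)) (proj2_sig l) (proj2_sig l') f1 f2) as [e1 e2]; try lia.
  f_equal. apply sig_eq; auto. lia.
Qed.
Definition Yn n (X : Z -> edge G) : Prop :=
  (forall t, (n <= c (src G (X t)))%nat) /\
  (forall m, exists t, t <= m /\ visit n X t) /\
  (forall m, exists t, m <= t /\ visit n X t).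

Lemma img_sub_Y n y : Yn n (proj1_sig (psiN n y)).
Proof.
  split; [|split].
  - intro t. cbn [psiN proj1_sig]. unfold gL.
    destruct (proj1_sig (proj1_sig y t)) as [l j] eqn:E. cbn [fst snd].
    destruct (psi_fits n y t l j E) as [f b].
    destruct (proj2_sig l) as [_ [h2 [_ h4]]].
    destruct j as [|j].
    + unfold nthl; cbn [nth ll]. lia.
    + pose proof (h4 (S j) ltac:(lia)). lia.
  - intro m. destruct (proj1_sig (proj1_sig y m)) as [l j] eqn:E.
    destruct (psi_fits n y m l j E) as [f b].
    exists (m - Z.of_nat j). split; [lia|]. eapply fits_start; eauto. apply (proj2_sig l).
  - intro m. destruct (proj1_sig (proj1_sig y m)) as [l j] eqn:E.
    destruct (psi_fits n y m l j E) as [f b].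
    exists (m - Z.of_nat j + Z.of_nat (len (proj1_sig l))). split; [lia|].
    eapply fits_end; eauto. apply (proj2_sig (psiN n y)). apply (proj2_sig l).
Qed.

Lemma nth_mk (X : Z -> edge G) k N t : (t < S N)%nat ->
  nth t (X k :: map (fun i => X (k + Z.of_nat (S i))) (seq 0 N)) (X k) = X (k + Z.of_nat t).
Proof.
  intro h. destruct t as [|t].
  - cbn [nth]. f_equal; lia.
  - cbn [nth]. set (f := fun i => X (k + Z.of_nat (S i))).
    transitivity (nth t (map f (seq 0 N)) (f 0%nat)).
    + apply nth_indep. rewrite length_map, length_seq; lia.
    + rewrite map_nth, seq_nth by lia. unfold f. f_equal.
Qed.

Lemma ex_fit n X m : is_path G X -> Yn n X ->
  exists k (l : Loop n), k <= m < k + Z.of_nat (len (proj1_sig l)) /\ fits X k (proj1_sig l).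
Proof.
  intros hp [hge [hpast hfut]].
  destruct (hpast m) as [t0 [h0 v0]].
  destruct (last_before (visit n X) m t0 h0 v0) as [k [hk [vk nk]]].
  destruct (hfut (m+1)) as [t1 [h1 v1]].
  destruct (first_after (visit n X) m t1 ltac:(lia) v1) as [q [hq [vq nq]]].
  set (N := Z.to_nat (q - k)).
  set (l := (X k, map (fun i => X (k + Z.of_nat (S i))) (seq 0 (N - 1)))).
  assert (hlen : len l = N) by (unfold len, l; cbn [snd]; rewrite length_map, length_seq; unfold N; lia).
  assert (hn : forall t, (t < N)%nat -> nthl l t = X (k + Z.of_nat t)).
  { intros t ht. unfold nthl, ll, l. cbn [fst snd]. apply nth_mk. lia. }
  assert (g : good n l).
  { split; [|split; [|split]].
    - intros j hj. rewrite hlen in hj. rewrite !hn by lia. rewrite hp. f_equal. f_equal. lia.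
    - exact vk.
    - rewrite hlen, hn by lia. rewrite hp. replace (k + Z.of_nat (N - 1) + 1) with q by (unfold N; lia). exact vq.
    - intros j hj. rewrite hlen in hj. rewrite hn by lia.
      pose proof (hge (k + Z.of_nat j)) as hg.
      assert (c (src G (X (k + Z.of_nat j))) <> n).
      { intro e. destruct (Z_le_gt_dec (k + Z.of_nat j) m).
        - apply (nk (k + Z.of_nat j)); [lia | exact e].
        - apply (nq (k + Z.of_nat j)); [unfold N in hj; lia | exact e]. }
      lia. }
  exists k, (exist _ l g). cbn [proj1_sig]. rewrite hlen. split.
  - unfold N; lia.
  - intros t ht. rewrite hn; auto. rewrite <- hlen; auto.
Qed.

Lemma psi_surj n (x : path G) : Yn n (proj1_sig x) -> exists y, psiN n y = x.
Proof.
  intro hY. destruct x as [X hX]. cbn [proj1_sig] in hY.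
  assert (F : forall m, exists p : Z * Loop n, fst p <= m < fst p + Z.of_nat (len (proj1_sig (snd p))) /\ fits X (fst p) (proj1_sig (snd p))).
  { intro m. destruct (ex_fit n X m hX hY) as [k [l h]]. exists (k,l); exact h. }
  set (f := fun m => proj1_sig (constructive_indefinite_description _ (F m))).
  assert (hf : forall m, fst (f m) <= m < fst (f m) + Z.of_nat (len (proj1_sig (snd (f m)))) /\ fits X (fst (f m)) (proj1_sig (snd (f m))))
    by (intro m; exact (proj2_sig (constructive_indefinite_description _ (F m)))).
  assert (A : forall m, exists a : LE n, proj1_sig a = (snd (f m), Z.to_nat (m - fst (f m)))).
  { intro m. destruct (hf m) as [[h1 h2] _].
    unshelve eexists (exist _ (snd (f m), Z.to_nat (m - fst (f m))) _).
    - cbn [fst snd]. lia.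
    - reflexivity. }
  set (ya := fun m => proj1_sig (constructive_indefinite_description _ (A m))).
  assert (hya : forall m, proj1_sig (ya m) = (snd (f m), Z.to_nat (m - fst (f m))))
    by (intro m; exact (proj2_sig (constructive_indefinite_description _ (A m)))).
  assert (hpath : is_path (L n) ya).
  { intro m. cbn [L tgt src]. apply vval_inj. rewrite vval_tgt, vval_src, !hya. cbn [fst snd].
    generalize (hf m) (hf (m+1)).
    destruct (f m) as [k l], (f (m+1)) as [k' l']; cbn [fst snd]. intros [c1 f1] [c2 f2].
    destruct (Nat.ltb_spec (S (Z.to_nat (m - k))) (len (proj1_sig l))).
    - destruct (fits_unique n X k (proj1_sig l) k' (proj1_sig l') (m+1) hX (proj2_sig l) (proj2_sig l') f1 f2) as [e1 e2]; try lia.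
      subst k'. apply sig_eq in e2. subst l'.
      destruct (Nat.eqb_spec (Z.to_nat (m + 1 - k)) 0); try lia. f_equal. f_equal. lia.
    - assert (k' = m + 1).
      { destruct (Z.lt_trichotomy k' (m+1)) as [h|[h|h]]; try lia.
        destruct (fits_unique n X k (proj1_sig l) k' (proj1_sig l') m hX (proj2_sig l) (proj2_sig l') f1 f2) as [e1 e2]; try lia.
        subst k'. rewrite e2 in *. lia. }
      subst k'. destruct (Nat.eqb_spec (Z.to_nat (m + 1 - (m + 1))) 0); try lia. reflexivity. }
  exists (exist _ ya hpath). apply path_ext. intro m. cbn [psiN proj1_sig]. unfold gL. rewrite hya. cbn [fst snd].
  destruct (hf m) as [c1 f1]. rewrite <- f1 by lia. f_equal. lia.
Qed.

Lemma img_iff n x : (exists y, psiN n y = x) <-> Yn n (proj1_sig x).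
Proof.
  split.
  - intros [y <-]. apply img_sub_Y.
  - apply psi_surj.
Qed.

Lemma cyl_char n m (a : LE n) x : (exists y, psiN n y = x /\ proj1_sig y m = a) <->
  Yn n (proj1_sig x) /\ fits (proj1_sig x) (m - Z.of_nat (snd (proj1_sig a))) (proj1_sig (fst (proj1_sig a))).
Proof.
  split.
  - intros [y [<- ha]]. split. apply img_sub_Y.
    destruct (proj1_sig a) as [l j] eqn:E. cbn [fst snd].
    apply (psi_fits n y m l j). rewrite ha. exact E.
  - intros [hY hf]. destruct (psi_surj n x hY) as [y hy]. exists y. split; auto.
    apply sig_eq. destruct (proj1_sig a) as [l j] eqn:E. cbn [fst snd] in hf.
    assert (hj : (j < len (proj1_sig l))%nat).
    { pose proof (proj2_sig a) as hh. cbn beta in hh. rewrite E in hh. exact hh. }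
    destruct (proj1_sig (proj1_sig y m)) as [l' j'] eqn:E2.
    destruct (psi_fits n y m l' j' E2) as [f2 b2]. rewrite hy in f2.
    destruct (fits_unique n _ _ _ _ _ m (proj2_sig x) (proj2_sig l) (proj2_sig l') hf f2) as [e1 e2]; try lia.
    f_equal. apply sig_eq; auto. lia.
Qed.

Lemma borel_visit n t : borel G (fun x => visit n (proj1_sig x) t).
Proof. exact (borel_coord G (fun e => c (src G e) = n) t). Qed.

Lemma borel_Y n : borel G (fun x => Yn n (proj1_sig x)).
Proof.
  unfold Yn. apply borel_and; [|apply borel_and].
  - apply (borel_all_Z G (fun t x => (n <= c (src G (proj1_sig x t)))%nat)). intro t.
    exact (borel_coord G (fun e => (n <= c (src G e))%nat) t).
  - apply (borel_all_Z G (fun m x => exists t, t <= m /\ visit n (proj1_sig x) t)). intro m.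
    apply (borel_ex_Z G (fun t x => t <= m /\ visit n (proj1_sig x) t)). intro t.
    apply borel_and_prop, borel_visit.
  - apply (borel_all_Z G (fun m x => exists t, m <= t /\ visit n (proj1_sig x) t)). intro m.
    apply (borel_ex_Z G (fun t x => m <= t /\ visit n (proj1_sig x) t)). intro t.
    apply borel_and_prop, borel_visit.
Qed.

Lemma borel_fits k l : borel G (fun x => fits (proj1_sig x) k l).
Proof.
  unfold fits. apply (borel_all_nat G (fun t x => (t < len l)%nat -> proj1_sig x (k + Z.of_nat t) = nthl l t)).
  intro t. apply borel_imp_prop, borel_cyl.
Qed.

Lemma borel_img_cyl n m a : borel G (fun x => exists y, psiN n y = x /\ proj1_sig y m = a).
Proof.
  eapply borel_ext; [|intro x; symmetry; apply cyl_char].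
  apply borel_and. apply borel_Y. apply borel_fits.
Qed.

Lemma borel_img n : borel G (fun x => exists y, psiN n y = x).
Proof. eapply borel_ext; [apply borel_Y|]. intro x; symmetry; apply img_iff. Qed.
Lemma Yn_shift n X : Yn n (fun t => X (t + 1)) <-> Yn n X.
Proof.
  unfold Yn, visit. split.
  - intros [h1 [h2 h3]]. split; [|split].
    + intro t. specialize (h1 (t - 1)). replace (t - 1 + 1) with t in h1 by lia. auto.
    + intro m. destruct (h2 (m - 1)) as [t [ht v]]. exists (t + 1). split; auto. lia.
    + intro m. destruct (h3 (m - 1)) as [t [ht v]]. exists (t + 1). split; auto. lia.
  - intros [h1 [h2 h3]]. split; [|split].
    + intro t. apply h1.
    + intro m. destruct (h2 (m + 1)) as [t [ht v]]. exists (t - 1). replace (t - 1 + 1) with t by lia. split; auto. lia.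
    + intro m. destruct (h3 (m + 1)) as [t [ht v]]. exists (t - 1). replace (t - 1 + 1) with t by lia. split; auto. lia.
Qed.

Definition Wset (x : path G) : Prop := ~ exists n, Yn n (proj1_sig x).

Definition Uk (k : nat) (p : Z) (b : bool) (X : Z -> edge G) : Prop :=
  visit k X p /\ (if b then forall t, t < p -> ~ visit k X t else forall t, p < t -> ~ visit k X t).

Definition zc (p : Z) : nat := to_nat (Z.to_nat p, Z.to_nat (- p)).
Definition enc (k : nat) (p : Z) (b : bool) : nat := to_nat (k, to_nat (zc p, if b then 1%nat else 0%nat)).

Lemma enc_inj k p b k' p' b' : enc k p b = enc k' p' b' -> k = k' /\ p = p' /\ b = b'.
Proof.
  unfold enc, zc. intro h. apply to_nat_inj in h.
  pose proof (f_equal fst h) as h1. pose proof (f_equal snd h) as h2. cbn [fst snd] in h1, h2.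
  apply to_nat_inj in h2.
  pose proof (f_equal fst h2) as h3. pose proof (f_equal snd h2) as h4. cbn [fst snd] in h3, h4.
  apply to_nat_inj in h3.
  pose proof (f_equal fst h3) as h5. pose proof (f_equal snd h3) as h6. cbn [fst snd] in h5, h6.
  repeat split; auto. lia. destruct b, b'; cbn in h4; congruence.
Qed.

Definition U (m : nat) (x : path G) : Prop := exists k p b, enc k p b = m /\ Uk k p b (proj1_sig x).

Lemma borel_Uk k p b : borel G (fun x => Uk k p b (proj1_sig x)).
Proof.
  unfold Uk. apply borel_and. apply borel_visit. destruct b.
  - apply (borel_all_Z G (fun t x => t < p -> ~ visit k (proj1_sig x) t)). intro t.
    apply borel_imp_prop, borel_compl, borel_visit.
  - apply (borel_all_Z G (fun t x => p < t -> ~ visit k (proj1_sig x) t)). intro t.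
    apply borel_imp_prop, borel_compl, borel_visit.
Qed.

Lemma borel_U m : borel G (U m).
Proof.
  eapply borel_ext.
  - apply (borel_nunion G (fun k x => exists p, (enc k p true = m /\ Uk k p true (proj1_sig x)) \/ (enc k p false = m /\ Uk k p false (proj1_sig x)))).
    intro k. apply (borel_ex_Z G (fun p x => (enc k p true = m /\ Uk k p true (proj1_sig x)) \/ (enc k p false = m /\ Uk k p false (proj1_sig x)))).
    intro p. apply borel_or; apply borel_and_prop, borel_Uk.
  - intro x; unfold U; split.
    + intros [k [p [[h1 h2]|[h1 h2]]]]; eauto.
    + intros [k [p [[|] [h1 h2]]]]; eauto.
Qed.

Lemma U_wand m : wandering G (U m).
Proof.
  split. apply borel_U.
  intros j i hji x [[w [hw ->]] [w' [hw' he]]].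
  destruct hw as [k [p [b [he1 hu]]]]. destruct hw' as [k' [p' [b' [he2 hu']]]].
  rewrite <- he2 in he1. apply enc_inj in he1. destruct he1 as [<- [<- <-]].
  apply hji.
  assert (hx : forall t, proj1_sig w (t + j) = proj1_sig w' (t + i)).
  { intro t. change (proj1_sig (shiftZ G j w) t = proj1_sig (shiftZ G i w') t). rewrite he. reflexivity. }
  destruct hu as [v1 n1], hu' as [v2 n2]. unfold visit in *.
  destruct (Z.lt_trichotomy j i) as [h|[h|h]]; auto; exfalso; destruct b.
  - apply (n1 (p - i + j)); [lia|]. rewrite hx. replace (p - i + i) with p by lia. auto.
  - apply (n2 (p - j + i)); [lia|]. rewrite <- hx. replace (p - j + j) with p by lia. auto.
  - apply (n2 (p - j + i)); [lia|]. rewrite <- hx. replace (p - j + j) with p by lia. auto.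
  - apply (n1 (p - i + j)); [lia|]. rewrite hx. replace (p - i + i) with p by lia. auto.
Qed.

Lemma W_cover x : Wset x -> exists m, U m x.
Proof.
  intro hW. set (X := proj1_sig x).
  destruct (least_nat (fun k => exists t, c (src G (X t)) = k)) as [n [[t0 v0] hmin]].
  { exists (c (src G (X 0))). eauto. }
  assert (hge : forall t, (n <= c (src G (X t)))%nat) by (intro t; apply hmin; eauto).
  destruct (classic (forall m, exists t, t <= m /\ visit n X t)) as [hp|hp].
  - destruct (classic (forall m, exists t, m <= t /\ visit n X t)) as [hf|hf].
    + exfalso. apply hW. exists n. split; auto.
    + apply not_all_ex_not in hf. destruct hf as [m hm].
      assert (t0 < m).
      { destruct (Z_lt_ge_dec t0 m); auto. exfalso. apply hm. exists t0. split; auto. lia. }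
      destruct (last_before (visit n X) m t0 ltac:(lia) v0) as [k [hk [vk nk]]].
      exists (enc n k false), n, k, false. split; auto. split; auto.
      intros t ht vt. destruct (Z_le_gt_dec t m).
      * apply (nk t); auto; lia.
      * apply hm. exists t. split; auto; lia.
  - apply not_all_ex_not in hp. destruct hp as [m hm].
    assert (m < t0).
    { destruct (Z_lt_ge_dec m t0); auto. exfalso. apply hm. exists t0. split; auto. lia. }
    destruct (first_after (visit n X) m t0 ltac:(lia) v0) as [q [hq [vq nq]]].
    exists (enc n q true), n, q, true. split; auto. split; auto.
    intros t ht vt. destruct (Z_le_gt_dec t m).
    + apply hm. exists t. split; auto.
    + apply (nq t); auto; lia.
Qed.

Lemma main_sec :
  exists W : path G -> Prop,
    borel G W /\ invariant G W /\ weakly_wandering G W /\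
    exists L : nat -> graph,
      (forall n, loop_graph (L n)) /\
      exists psi : union_space L -> path G,
        (forall u v, psi u = psi v -> u = v) /\
        (forall x, ~ W x <-> exists u, psi u = x) /\
        (forall u, psi (union_shift L u) = shift G (psi u)) /\
        (forall A, borel G A -> union_borel L (fun u => A (psi u))) /\
        (forall B, union_borel L B -> borel G (fun x => exists u, B u /\ psi u = x)).
Proof.
  assert (hWb : borel G Wset).
  { apply borel_compl. apply (borel_nunion G (fun n x => Yn n (proj1_sig x))). apply borel_Y. }
  exists Wset. split; [|split; [|split]].
  - exact hWb.
  - intro x. unfold Wset. split; intros h [n hn]; apply h; exists n.
    + apply Yn_shift. exact hn.
    + apply (Yn_shift n (proj1_sig x)). exact hn.
  - split. exact hWb. exists U. split. apply U_wand. apply W_cover.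
  - exists L. split. apply L_loop.
    exists (fun u => psiN (projT1 u) (projT2 u)).
    split; [|split; [|split; [|split]]].
    + intros [n y] [n' y'] h. cbn [projT1 projT2] in h.
      pose proof (img_sub_Y n y) as [a1 [b1 _]]. pose proof (img_sub_Y n' y') as [a2 [b2 _]].
      rewrite h in a1, b1.
      assert (n = n').
      { destruct (b1 0) as [t1 [_ v1]]. destruct (b2 0) as [t2 [_ v2]]. unfold visit in *.
        specialize (a1 t2). specialize (a2 t1). lia. }
      subst n'. apply psi_inj in h. subst. reflexivity.
    + intro x. unfold Wset. split.
      * intro h. apply NNPP in h. destruct h as [n hn]. apply img_iff in hn. destruct hn as [y hy].
        exists (existT _ n y). exact hy.
      * intros [[n y] hy] h. apply h. exists n. apply img_iff. exists y. exact hy.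
    + intros [n y]. apply path_ext. intro m. reflexivity.
    + intros A hA n. cbn [projT1 projT2].
      apply (borel_pullback (L n) G (psiN n)); auto. intros m e.
      exact (borel_coord (L n) (fun a => gL n a = e) m).
    + intros B hB. eapply borel_ext.
      * apply (borel_nunion G (fun n x => exists y, psiN n y = x /\ B (existT _ n y))). intro n.
        apply (borel_push (L n) G (psiN n) (psi_inj n) (borel_img n) (borel_img_cyl n) (fun y => B (existT _ n y))).
        apply hB.
      * intro x. split.
        -- intros [n [y [h1 h2]]]. exists (existT _ n y). auto.
        -- intros [[n y] [h1 h2]]. exists n, y. auto.
Qed.

End Main.

Theorem lemma3p6 (G : graph) :
  exists W : path G -> Prop,
    borel G W /\ invariant G W /\ weakly_wandering G W /\
    exists L : nat -> graph,
      (forall n, loop_graph (L n)) /\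
      exists psi : union_space L -> path G,
        (forall u v, psi u = psi v -> u = v) /\
        (forall x, ~ W x <-> exists u, psi u = x) /\
        (forall u, psi (union_shift L u) = shift G (psi u)) /\
        (forall A, borel G A -> union_borel L (fun u => A (psi u))) /\
        (forall B, union_borel L B -> borel G (fun x => exists u, B u /\ psi u = x)).
Proof.
  destruct (vert_countable G) as [c hc]. destruct (edge_countable G) as [ce hce].
  eapply main_sec; eauto.
Qed.
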